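(* Let $X_0,X_1,\ldots$ be a stationary mean-zero Gaussian sequence with covariance $\Gamma(k)=\mathrm{E}[X_0X_k]$, $\Gamma(0)=1$, having a spectral density $f$ (so $\Gamma(k)=\int_{-\pi}^{\pi}e^{-ik\phi}f(\phi)\,d\phi$) which is continuous and strictly positive on $[-\pi,\pi]$. Let $K=K_n$ be real numbers with $K=o\!\left(\sqrt{n/\log\log n}\right)$. With $$A(x)=\sum_{k=0}^{n}\sum_{j=0}^{n}\Gamma(k-j)x^{k+j},\quad B(x)=\sum_{k=0}^{n}\sum_{j=0}^{n}\Gamma(k-j)\,k\,x^{k+j-1},\quad C(x)=\sum_{k=0}^{n}\sum_{j=0}^{n}\Gamma(k-j)\,kj\,x^{k+j-2},$$ and $$F_2(x)=\frac{1}{\pi}\,\frac{\sqrt{2}\,|B(x)K|}{A(x)^{3/2}}\exp\!\left(-\frac{K^2}{2A(x)}\right)\mathrm{erf}\!\left(\frac{|B(x)K|}{\sqrt{2A(x)\left(A(x)C(x)-B(x)^2\right)}}\right),$$ we have, as $n\to\infty$, $$\int_1^{\infty}F_2(x)\,dx=o(1)\quad\text{and}\quad\int_{-\infty}^{-1}F_2(x)\,dx=o(1).$$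
   Context: $\mathrm{erf}(u)=\frac{2}{\sqrt{\pi}}\int_0^u e^{-t^2}dt$. *)

(* Defs.v *)
From Stdlib Require Import Reals Lra.
From Coquelicot Require Import Coquelicot.
Open Scope R_scope.

Definition erf (u : R) : R :=
  2 / sqrt PI * RInt (fun t => exp (- t ^ 2)) 0 u.

Definition Afun (Gam : Z -> R) (n : nat) (x : R) : R :=
  sum_f_R0 (fun k => sum_f_R0 (fun j =>
    Gam (Z.of_nat k - Z.of_nat j)%Z * x ^ (k + j)) n) n.

(* B(x) = sum sum Gamma(k-j) k x^(k+j-1); the k = 0 terms vanish,
   so truncated nat subtraction is harmless. *)
Definition Bfun (Gam : Z -> R) (n : nat) (x : R) : R :=
  sum_f_R0 (fun k => sum_f_R0 (fun j =>
    Gam (Z.of_nat k - Z.of_nat j)%Z * INR k * x ^ (k + j - 1)) n) n.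

(* C(x) = sum sum Gamma(k-j) k j x^(k+j-2); terms with k = 0 or j = 0
   vanish, so truncated nat subtraction is harmless. *)
Definition Cfun (Gam : Z -> R) (n : nat) (x : R) : R :=
  sum_f_R0 (fun k => sum_f_R0 (fun j =>
    Gam (Z.of_nat k - Z.of_nat j)%Z * INR k * INR j * x ^ (k + j - 2)) n) n.

Definition F2 (Gam : Z -> R) (n : nat) (K : R) (x : R) : R :=
  let A := Afun Gam n x in
  let B := Bfun Gam n x in
  let C := Cfun Gam n x in
  (1 / PI) * (sqrt 2 * Rabs (B * K) / Rpower A (3 / 2))
  * exp (- (K ^ 2) / (2 * A))
  * erf (Rabs (B * K) / sqrt (2 * A * (A * C - B ^ 2))).

(* Main.v *)
Require Import Defs.
From Stdlib Require Import Reals Lra Lia Classical.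
From Coquelicot Require Import Coquelicot.
Open Scope R_scope.


Lemma cont_mult (f g : R -> R) x : continuous f x -> continuous g x ->
  continuous (fun y => f y * g y) x.
Proof. intros; now apply (continuous_mult f g). Qed.
Lemma cont_plus (f g : R -> R) x : continuous f x -> continuous g x ->
  continuous (fun y => f y + g y) x.
Proof. intros; now apply (continuous_plus f g). Qed.
Lemma cont_opp (f : R -> R) x : continuous f x -> continuous (fun y => - f y) x.
Proof. intros; now apply (continuous_opp f). Qed.
Lemma cont_minus (f g : R -> R) x : continuous f x -> continuous g x ->
  continuous (fun y => f y - g y) x.
Proof. intros; apply cont_plus; auto; now apply cont_opp. Qed.
Lemma cont_inv (f : R -> R) x : continuous f x -> f x <> 0 -> continuous (fun y => / f y) x.
Proof. intros; now apply continuous_Rinv_comp. Qed.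
Lemma cont_div (f g : R -> R) x : continuous f x -> continuous g x -> g x <> 0 ->
  continuous (fun y => f y / g y) x.
Proof. intros; apply cont_mult; auto; now apply cont_inv. Qed.
Lemma cont_const (c x : R) : continuous (fun _ : R => c) x.
Proof. apply continuous_const. Qed.
Lemma cont_id (x : R) : continuous (fun y : R => y) x.
Proof. apply continuous_id. Qed.
Lemma cont_pow (f : R -> R) x k : continuous f x -> continuous (fun y => f y ^ k) x.
Proof. intros H; induction k; simpl. apply cont_const. now apply cont_mult. Qed.
Lemma cont_sum (h : nat -> R -> R) x n : (forall k, continuous (h k) x) ->
  continuous (fun y => sum_f_R0 (fun k => h k y) n) x.
Proof. intros H; induction n; simpl; auto. now apply cont_plus. Qed.
Lemma cont_ext (f g : R -> R) x : (forall y, f y = g y) -> continuous f x -> continuous g x.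
Proof. intros E H. apply (continuous_ext f g); auto. Qed.

Lemma ex_RInt_sum (h : nat -> R -> R) a b n : (forall k, ex_RInt (h k) a b) ->
  ex_RInt (fun y => sum_f_R0 (fun k => h k y) n) a b.
Proof. intros H; induction n; simpl; auto. now apply (ex_RInt_plus (V:=R_NormedModule)). Qed.

Lemma RInt_sum (h : nat -> R -> R) a b n : (forall k, ex_RInt (h k) a b) ->
  RInt (fun y => sum_f_R0 (fun k => h k y) n) a b = sum_f_R0 (fun k => RInt (h k) a b) n.
Proof.
  intros H; induction n; simpl; auto.
  rewrite <- IHn. apply (RInt_plus (V:=R_CompleteNormedModule)); auto. now apply ex_RInt_sum.
Qed.

Lemma RInt_scal_l (h : R -> R) a b c : ex_RInt h a b -> RInt (fun y => c * h y) a b = c * RInt h a b.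
Proof. intros H. apply (RInt_scal (V:=R_CompleteNormedModule)); auto. Qed.

Lemma sum_nonneg (h : nat -> R) n : (forall k, (k <= n)%nat -> 0 <= h k) -> 0 <= sum_f_R0 h n.
Proof.
  intros H; induction n; simpl. apply H; lia.
  assert (0 <= sum_f_R0 h n) by (apply IHn; intros; apply H; lia).
  assert (0 <= h (S n)) by (apply H; lia). lra.
Qed.

Lemma sum_ge_term (h : nat -> R) n i : (forall k, (k <= n)%nat -> 0 <= h k) -> (i <= n)%nat ->
  h i <= sum_f_R0 h n.
Proof.
  intros H Hi; induction n; simpl.
  - replace i with 0%nat by lia; lra.
  - destruct (Nat.eq_dec i (S n)) as [->|ne].
    + assert (0 <= sum_f_R0 h n). { apply sum_nonneg. intros; apply H; lia. } 
      lra.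
    + assert (h i <= sum_f_R0 h n) by (apply IHn; [intros; apply H; lia| lia]).
      assert (0 <= h (S n)) by (apply H; lia). lra.
Qed.

Lemma sum_delta n k c : (k <= n)%nat ->
  sum_f_R0 (fun j => if Nat.eq_dec k j then c else 0) n = c.
Proof.
  intros H; induction n; simpl.
  - replace k with 0%nat by lia. destruct Nat.eq_dec; lia || lra.
  - destruct (Nat.eq_dec k (S n)).
    + subst. rewrite (sum_eq _ (fun _ => 0)). rewrite sum_cte. lra.
      intros i Hi. destruct Nat.eq_dec; lia || lra.
    + rewrite IHn by lia. lra.
Qed.

Lemma sum_rev (a : nat -> R) n : sum_f_R0 (fun k => a (n - k)%nat) n = sum_f_R0 a n.
Proof.
  revert a; induction n; intros a; [simpl; auto|].
  rewrite decomp_sum by lia. simpl pred.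
  rewrite (sum_eq (fun i => a (S n - S i)%nat) (fun i => a (n - i)%nat)).
  2:{ intros i Hi. f_equal. }
  rewrite IHn. simpl. replace (n - 0)%nat with n by lia. lra.
Qed.

Definition Pc n (a : nat -> R) (p : R) := sum_f_R0 (fun k => a k * cos (INR k * p)) n.
Definition Ps n (a : nat -> R) (p : R) := sum_f_R0 (fun k => a k * sin (INR k * p)) n.

Lemma sum_lin2 (f g : nat -> R) X Y n :
  sum_f_R0 (fun j => X * f j + Y * g j) n = X * sum_f_R0 f n + Y * sum_f_R0 g n.
Proof. induction n; simpl; [ring|rewrite IHn; ring]. Qed.

Lemma sum_scal (f : nat -> R) X n : sum_f_R0 (fun j => X * f j) n = X * sum_f_R0 f n.
Proof. induction n; simpl; [ring|rewrite IHn; ring]. Qed.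

Lemma pointwise_QF n a b p :
  sum_f_R0 (fun k => sum_f_R0 (fun j => a k * b j * cos ((INR k - INR j) * p)) n) n
  = Pc n a p * Pc n b p + Ps n a p * Ps n b p.
Proof.
  unfold Pc, Ps.
  rewrite (sum_eq _ (fun k => Pc n b p * (a k * cos (INR k * p)) + Ps n b p * (a k * sin (INR k * p)))).
  - rewrite sum_lin2. unfold Pc, Ps; ring.
  - intros k Hk.
    rewrite (sum_eq _ (fun j => (a k * cos (INR k * p)) * (b j * cos (INR j * p)) +
                                (a k * sin (INR k * p)) * (b j * sin (INR j * p)))).
    + rewrite sum_lin2. unfold Pc, Ps; ring.
    + intros j Hj. replace ((INR k - INR j) * p) with (INR k * p - INR j * p) by ring.
      rewrite cos_minus. ring.
Qed.

Lemma cont_cosw (w : R -> R) d (x : R) : continuous w x ->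
  continuous (fun p => cos (d * p) * w p) x.
Proof.
  intros H. apply cont_mult; auto. apply continuous_cos_comp.
  apply cont_mult; [apply cont_const|apply cont_id].
Qed.

Lemma ex_cosw (w : R -> R) d c : (forall x, continuous w x) ->
  ex_RInt (fun p => c * (cos (d * p) * w p)) (-PI) PI.
Proof.
  intros H. apply (ex_RInt_continuous (V:=R_CompleteNormedModule)). intros z _.
  apply cont_mult; [apply cont_const|]. now apply cont_cosw.
Qed.

Lemma QF_gen (w : R -> R) n a b : (forall x, continuous w x) ->
  sum_f_R0 (fun k => sum_f_R0 (fun j =>
     RInt (fun p => cos ((INR k - INR j) * p) * w p) (-PI) PI * a k * b j) n) n
  = RInt (fun p => (Pc n a p * Pc n b p + Ps n a p * Ps n b p) * w p) (-PI) PI.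
Proof.
  intros Hw.
  rewrite (RInt_ext _ (fun p => sum_f_R0 (fun k => sum_f_R0 (fun j =>
      a k * b j * (cos ((INR k - INR j) * p) * w p)) n) n)).
  2:{ intros x _. rewrite <- pointwise_QF.
      rewrite Rmult_comm, <- sum_scal. apply sum_eq; intros k _.
      rewrite <- sum_scal. apply sum_eq; intros j _. ring. }
  rewrite RInt_sum.
  2:{ intros k. apply ex_RInt_sum. intros j. now apply ex_cosw. }
  apply sum_eq; intros k _.
  rewrite RInt_sum.
  2:{ intros j. now apply ex_cosw. }
  apply sum_eq; intros j _.
  rewrite RInt_scal_l. ring.
  apply (ex_cosw w (INR k - INR j) 1) in Hw.
  eapply ex_RInt_ext; [|exact Hw]. intros; simpl; ring.
Qed.

Lemma orth k j :
  RInt (fun p => cos ((INR k - INR j) * p) * 1) (-PI) PI =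
  if Nat.eq_dec k j then 2 * PI else 0.
Proof.
  destruct (Nat.eq_dec k j) as [e|ne]; cbv beta iota.
  - subst j. rewrite (RInt_ext _ (fun _ => 1)).
    + rewrite RInt_const. unfold scal; simpl; unfold mult; simpl. ring.
    + intros x _. replace (INR k - INR k) with 0 by ring. rewrite Rmult_0_l, cos_0. apply Rmult_1_r.
  - set (d := INR k - INR j).
    assert (dz : d <> 0). { unfold d. intro E. apply ne. apply INR_eq. lra. }
    assert (Hs : forall s, s = 1 \/ s = -1 -> sin (d * (s * PI)) = 0).
    { intros s Hs. apply sin_eq_0_1. destruct Hs as [->| ->].
      - exists (Z.of_nat k - Z.of_nat j)%Z.
        rewrite minus_IZR, <- !INR_IZR_INZ. unfold d. ring.
      - exists (- (Z.of_nat k - Z.of_nat j))%Z.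
        rewrite opp_IZR, minus_IZR, <- !INR_IZR_INZ. unfold d. ring. }
    assert (H := is_RInt_derive (fun p => sin (d * p) / d) (fun p => cos (d * p) * 1) (-PI) PI).
    assert (E : minus (sin (d * PI) / d) (sin (d * - PI) / d) = 0).
    { replace PI with (1 * PI) at 1 by ring. replace (- PI) with (-1 * PI) by ring.
      rewrite !Hs by auto. unfold minus, plus, opp; simpl. field. auto. }
    apply is_RInt_unique. rewrite <- E. apply H.
    + intros x _. auto_derive. auto. field. auto.
    + intros x _. apply (cont_cosw (fun _ => 1)). apply cont_const.
Qed.

Lemma norm_QF n a :
  RInt (fun p => (Pc n a p * Pc n a p + Ps n a p * Ps n a p) * 1) (-PI) PI
  = 2 * PI * sum_f_R0 (fun k => a k ^ 2) n.
Proof.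
  rewrite <- QF_gen by (intros; apply cont_const).
  rewrite <- sum_scal. apply sum_eq; intros k Hk.
  rewrite (sum_eq _ (fun j => if Nat.eq_dec k j then 2 * PI * a k ^ 2 else 0)).
  - now apply sum_delta.
  - intros j _. rewrite orth. destruct Nat.eq_dec; [subst; ring|ring].
Qed.

Lemma E_nonneg n a p : 0 <= Pc n a p * Pc n a p + Ps n a p * Ps n a p.
Proof. nra. Qed.

Lemma bounds_QF (w : R -> R) m M n a : (forall x, continuous w x) ->
  (forall p, -PI <= p <= PI -> m <= w p <= M) ->
  2 * PI * m * sum_f_R0 (fun k => a k ^ 2) n <=
  RInt (fun p => (Pc n a p * Pc n a p + Ps n a p * Ps n a p) * w p) (-PI) PI
  <= 2 * PI * M * sum_f_R0 (fun k => a k ^ 2) n.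
Proof.
  intros Hw Hb.
  set (E := fun p => Pc n a p * Pc n a p + Ps n a p * Ps n a p).
  assert (cE : forall x, continuous E x).
  { intros x; unfold E, Pc, Ps.
    apply cont_plus; apply cont_mult; apply cont_sum; intros k; apply cont_mult;
      try apply cont_const; try apply continuous_cos_comp; try apply continuous_sin_comp;
      apply cont_mult; try apply cont_const; apply cont_id. }
  assert (exw : ex_RInt (fun p => E p * w p) (-PI) PI).
  { apply (ex_RInt_continuous (V:=R_CompleteNormedModule)); intros; apply cont_mult; auto. }
  assert (ex1 : forall c, ex_RInt (fun p => c * (E p * 1)) (-PI) PI).
  { intros c; apply (ex_RInt_continuous (V:=R_CompleteNormedModule)); intros; apply cont_mult; [apply cont_const|].
    apply cont_mult; auto; apply cont_const. }
  assert (HPI := PI_RGT_0).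
  assert (N := norm_QF n a). fold E in N.
  split.
  - assert (Eq : @eq R (RInt (fun p => m * (E p * 1)) (-PI) PI) (2 * PI * m * sum_f_R0 (fun k => a k ^ 2) n)).
    { rewrite RInt_scal_l. unfold E; rewrite N. ring.
        eapply ex_RInt_ext; [|apply (ex1 1)]. intros; simpl; ring. }
    rewrite <- Eq. apply RInt_le; auto. lra. intros x Hx. cbv beta.
    assert (0 <= E x) by apply E_nonneg. destruct (Hb x) as [h1 h2]; [lra|].
    assert (0 <= E x * (w x - m)) by (apply Rmult_le_pos; lra).
    assert (0 <= E x * (M - w x)) by (apply Rmult_le_pos; lra).
    unfold E in *. nra.
  - assert (Eq : @eq R (RInt (fun p => M * (E p * 1)) (-PI) PI) (2 * PI * M * sum_f_R0 (fun k => a k ^ 2) n)).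
    { rewrite RInt_scal_l. unfold E; rewrite N. ring.
        eapply ex_RInt_ext; [|apply (ex1 1)]. intros; simpl; ring. }
    rewrite <- Eq. apply RInt_le; auto. lra. intros x Hx. cbv beta.
    assert (0 <= E x) by apply E_nonneg. destruct (Hb x) as [h1 h2]; [lra|].
    assert (0 <= E x * (w x - m)) by (apply Rmult_le_pos; lra).
    assert (0 <= E x * (M - w x)) by (apply Rmult_le_pos; lra).
    unfold E in *. nra.
Qed.

Definition clamp (y : R) : R :=
  let z := (PI + y - Rabs (PI - y)) / 2 in (z + - PI + Rabs (z + PI)) / 2.

Lemma clamp_bounds y : -PI <= clamp y <= PI.
Proof.
  assert (HPI := PI_RGT_0). unfold clamp; cbv zeta.
  set (z := (PI + y - Rabs (PI - y)) / 2).
  assert (z <= PI) by (unfold z; unfold Rabs; destruct Rcase_abs; lra).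
  destruct (Rcase_abs (z + PI)) as [h|h]; [rewrite Rabs_left by lra | rewrite Rabs_right by lra]; lra.
Qed.

Lemma clamp_id y : -PI <= y <= PI -> clamp y = y.
Proof.
  intros H. unfold clamp; cbv zeta.
  replace ((PI + y - Rabs (PI - y)) / 2) with y.
  - rewrite Rabs_right by lra. field.
  - rewrite Rabs_right by lra. field.
Qed.

Lemma clamp_cont y : continuous clamp y.
Proof.
  unfold clamp. apply cont_mult; [|apply cont_const].
  apply cont_plus. apply cont_plus.
  - apply cont_mult; [|apply cont_const]. apply cont_minus.
    apply cont_plus; [apply cont_const|apply cont_id].
    apply continuous_Rabs_comp. apply cont_minus; [apply cont_const|apply cont_id].
  - apply cont_const.
  - apply continuous_Rabs_comp. apply cont_plus; [|apply cont_const].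
    apply cont_mult; [|apply cont_const]. apply cont_minus.
    apply cont_plus; [apply cont_const|apply cont_id].
    apply continuous_Rabs_comp. apply cont_minus; [apply cont_const|apply cont_id].
Qed.

Lemma g_cont (f : R -> R)
  (hf_cont : forall phi, -PI <= phi <= PI ->
     filterlim f (within (fun y => -PI <= y <= PI) (locally phi)) (locally (f phi))) :
  forall y, continuous (fun y => f (clamp y)) y.
Proof.
  intros y. unfold continuous.
  eapply filterlim_comp; [|apply hf_cont, clamp_bounds].
  intros P HP. unfold filtermap. unfold within in HP.
  assert (Hc := clamp_cont y). unfold continuous in Hc.
  specialize (Hc _ HP). unfold filtermap in Hc.
  eapply filter_imp; [|exact Hc]. intros x Hx. apply Hx, clamp_bounds.
Qed.

Definition Qf (Gam : Z -> R) n (a b : nat -> R) :=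
  sum_f_R0 (fun k => sum_f_R0 (fun j => Gam (Z.of_nat k - Z.of_nat j)%Z * a k * b j) n) n.

Lemma Qf_int (Gam : Z -> R) (g : R -> R) n a b :
  (forall x, continuous g x) ->
  (forall z, Gam z = RInt (fun p => cos (IZR z * p) * g p) (-PI) PI) ->
  Qf Gam n a b = RInt (fun p => (Pc n a p * Pc n b p + Ps n a p * Ps n b p) * g p) (-PI) PI.
Proof.
  intros Hg HG. rewrite <- QF_gen by auto. unfold Qf.
  apply sum_eq; intros k _; apply sum_eq; intros j _.
  rewrite HG. rewrite minus_IZR, <- !INR_IZR_INZ. reflexivity.
Qed.

Lemma Qf_sym (Gam : Z -> R) (g : R -> R) n a b :
  (forall x, continuous g x) ->
  (forall z, Gam z = RInt (fun p => cos (IZR z * p) * g p) (-PI) PI) ->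
  Qf Gam n a b = Qf Gam n b a.
Proof.
  intros Hg HG. rewrite !(Qf_int Gam g) by auto. apply RInt_ext. intros; match goal with |- ?a = ?b => change (@eq R a b) end; ring.
Qed.

Lemma sum_lin4 (f1 f2 f3 f4 : nat -> R) c2 c3 c4 n :
  sum_f_R0 (fun k => f1 k + c2 * f2 k + c3 * f3 k + c4 * f4 k) n =
  sum_f_R0 f1 n + c2 * sum_f_R0 f2 n + c3 * sum_f_R0 f3 n + c4 * sum_f_R0 f4 n.
Proof. induction n; simpl; [ring|rewrite IHn; ring]. Qed.

Lemma Qf_quad (Gam : Z -> R) n a b t :
  Qf Gam n (fun k => a k - t * b k) (fun k => a k - t * b k) =
  Qf Gam n a a + (- t) * Qf Gam n a b + (- t) * Qf Gam n b a + (t * t) * Qf Gam n b b.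
Proof.
  unfold Qf. rewrite <- sum_lin4. apply sum_eq; intros k _.
  rewrite <- sum_lin4. apply sum_eq; intros j _. ring.
Qed.

Lemma Qf_bounds (Gam : Z -> R) (g : R -> R) m M n a :
  (forall x, continuous g x) ->
  (forall z, Gam z = RInt (fun p => cos (IZR z * p) * g p) (-PI) PI) ->
  (forall p, -PI <= p <= PI -> m <= g p <= M) ->
  2 * PI * m * sum_f_R0 (fun k => a k ^ 2) n <= Qf Gam n a a
  <= 2 * PI * M * sum_f_R0 (fun k => a k ^ 2) n.
Proof.
  intros Hg HG Hb. rewrite (Qf_int Gam g) by auto. now apply bounds_QF.
Qed.

Definition uu (x : R) := fun k : nat => x ^ k.
Definition vv (x : R) := fun k : nat => INR k * x ^ (k - 1).

Lemma A_eq Gam n x : Afun Gam n x = Qf Gam n (uu x) (uu x).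
Proof.
  unfold Afun, Qf, uu. apply sum_eq; intros k _; apply sum_eq; intros j _.
  rewrite pow_add. ring.
Qed.

Lemma B_eq Gam n x : Bfun Gam n x = Qf Gam n (vv x) (uu x).
Proof.
  unfold Bfun, Qf, uu, vv. apply sum_eq; intros k _; apply sum_eq; intros j _.
  destruct k. simpl; ring.
  replace (S k + j - 1)%nat with (k + j)%nat by lia.
  replace (S k - 1)%nat with k by lia. rewrite pow_add. ring.
Qed.

Lemma C_eq Gam n x : Cfun Gam n x = Qf Gam n (vv x) (vv x).
Proof.
  unfold Cfun, Qf, vv. apply sum_eq; intros k _; apply sum_eq; intros j _.
  destruct k. simpl; ring. destruct j. simpl; ring.
  replace (S k + S j - 2)%nat with (k + j)%nat by lia.
  replace (S k - 1)%nat with k by lia. replace (S j - 1)%nat with j by lia.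
  rewrite pow_add. ring.
Qed.

Definition Ssq n x := sum_f_R0 (fun k => uu x k ^ 2) n.

Lemma Ssq_ge1 n x : 1 <= Ssq n x.
Proof.
  unfold Ssq. replace 1 with (uu x 0 ^ 2) by (unfold uu; simpl; ring).
  apply (sum_ge_term (fun k => uu x k ^ 2)). intros; apply pow2_ge_0. lia.
Qed.

Lemma vsq_le n x : 1 <= Rabs x -> sum_f_R0 (fun k => vv x k ^ 2) n <= INR n ^ 2 * Ssq n x.
Proof.
  intros Hx. unfold Ssq. rewrite <- sum_scal. apply sum_Rle. intros k Hk.
  unfold vv, uu. destruct k. simpl; nra.
  replace (S k - 1)%nat with k by lia.
  assert (INR (S k) <= INR n) by (apply le_INR; lia).
  assert (0 <= INR (S k)) by apply pos_INR.
  assert ((x ^ k) ^ 2 <= (x ^ S k) ^ 2).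
  { rewrite <- !pow_mult. replace (S k * 2)%nat with (k * 2 + 2)%nat by lia.
    rewrite pow_add. assert (1 <= x ^ 2). { rewrite <- (pow2_abs x). nra. }
    assert (0 <= x ^ (k*2)). { rewrite pow_mult. apply pow2_ge_0. } nra. }
  assert (0 <= (x ^ k) ^ 2) by apply pow2_ge_0.
  rewrite Rpow_mult_distr. apply Rmult_le_compat; try nra.
Qed.

Lemma Ssq_amgm n x : INR (S n) * Rabs x ^ n <= Ssq n x.
Proof.
  unfold Ssq.
  assert (H : 2 * sum_f_R0 (fun k => uu x k ^ 2) n =
     sum_f_R0 (fun k => uu x k ^ 2 + uu x (n - k)%nat ^ 2) n).
  { rewrite plus_sum. rewrite (sum_rev (fun k => uu x k ^ 2)). ring. }
  assert (H2 : sum_f_R0 (fun _ => 2 * Rabs x ^ n) n <=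
     sum_f_R0 (fun k => uu x k ^ 2 + uu x (n - k)%nat ^ 2) n).
  { apply sum_Rle. intros k Hk. unfold uu.
    assert (E : Rabs x ^ n = Rabs (x ^ k) * Rabs (x ^ (n - k))).
    { rewrite <- Rabs_mult, <- pow_add. replace (k + (n - k))%nat with n by lia.
      now rewrite RPow_abs. }
    rewrite E. rewrite <- (pow2_abs (x ^ k)), <- (pow2_abs (x ^ (n - k))). pose proof (pow2_ge_0 (Rabs (x ^ k) - Rabs (x ^ (n - k)))). nra. }
  rewrite sum_cte in H2. rewrite S_INR in *. lra.
Qed.


Lemma key_ineqs (Gam : Z -> R) (g : R -> R) m M n x :
  (forall y, continuous g y) ->
  (forall z, Gam z = RInt (fun p => cos (IZR z * p) * g p) (-PI) PI) ->
  (forall p, -PI <= p <= PI -> m <= g p <= M) -> 0 < m -> (1 <= n)%nat ->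
  2 * PI * m * Ssq n x <= Afun Gam n x /\
  Cfun Gam n x <= 2 * PI * M * sum_f_R0 (fun k => vv x k ^ 2) n /\
  0 < Cfun Gam n x /\
  Bfun Gam n x ^ 2 < Afun Gam n x * Cfun Gam n x.
Proof.
  intros Hg HG Hb Hm Hn.
  assert (HPI := PI_RGT_0).
  rewrite A_eq, B_eq, C_eq.
  destruct (Qf_bounds Gam g m M n (uu x)) as [A1 _]; auto.
  destruct (Qf_bounds Gam g m M n (vv x)) as [C1 C2]; auto.
  assert (v1 : 1 <= sum_f_R0 (fun k => vv x k ^ 2) n).
  { replace 1 with (vv x 1 ^ 2) by (unfold vv; simpl; ring).
    apply (sum_ge_term (fun k => vv x k ^ 2)). intros; apply pow2_ge_0. lia. }
  assert (Cpos : 0 < Qf Gam n (vv x) (vv x)).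
  { assert (0 < 2 * PI * m) by nra. nra. }
  split; [exact A1|]. split; [exact C2|]. split; [exact Cpos|].
  set (A := Qf Gam n (uu x) (uu x)). set (B := Qf Gam n (vv x) (uu x)).
  set (C := Qf Gam n (vv x) (vv x)).
  set (t := B / C).
  destruct (Qf_bounds Gam g m M n (fun k => uu x k - t * vv x k)) as [W _]; auto.
  rewrite Qf_quad in W. rewrite (Qf_sym Gam g n (uu x) (vv x)) in W by auto.
  fold A B C in W.
  assert (w0 : 1 <= sum_f_R0 (fun k => (uu x k - t * vv x k) ^ 2) n).
  { replace 1 with ((uu x 0 - t * vv x 0) ^ 2) by (unfold uu, vv; simpl; ring).
    apply (sum_ge_term (fun k => (uu x k - t * vv x k) ^ 2)). intros; apply pow2_ge_0. lia. }
  assert (Q : 0 < A + - t * B + - t * B + t * t * C).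
  { assert (0 < 2 * PI * m) by nra. assert (0 < 2*PI*m * sum_f_R0 (fun k => (uu x k - t * vv x k) ^ 2) n) by (apply Rmult_lt_0_compat; lra). lra. }
  unfold t in Q.
  assert (E : A + - (B / C) * B + - (B / C) * B + B / C * (B / C) * C = (A * C - B ^ 2) / C)
    by (field; unfold C; lra).
  rewrite E in Q.
  assert (0 < A * C - B ^ 2).
  { apply (Rmult_lt_compat_r C) in Q; auto. unfold Rdiv in Q.
    rewrite Rmult_assoc, Rinv_l, Rmult_0_l in Q by (unfold C; lra). lra. }
  lra.
Qed.

Lemma erf_cont u : continuous erf u.
Proof.
  unfold erf. apply cont_mult; [apply cont_const|].
  apply (continuous_RInt_1 (fun t => exp (- t ^ 2)) 0 u (fun z => RInt (fun t => exp (- t ^ 2)) 0 z)).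
  apply filter_forall. intros z. apply (RInt_correct (V:=R_CompleteNormedModule)).
  apply (ex_RInt_continuous (V:=R_CompleteNormedModule)). intros. apply continuous_exp_comp.
  apply cont_opp, cont_pow, cont_id.
Qed.

Lemma erf_bounds u : 0 <= u -> 0 <= erf u <= sqrt PI.
Proof.
  intros Hu. assert (HPI := PI_RGT_0).
  assert (sp : 0 < sqrt PI) by (apply sqrt_lt_R0; lra).
  assert (ex1 : ex_RInt (fun t => exp (- t ^ 2)) 0 u).
  { apply (ex_RInt_continuous (V:=R_CompleteNormedModule)). intros. apply continuous_exp_comp.
    apply cont_opp, cont_pow, cont_id. }
  assert (I0 : 0 <= RInt (fun t => exp (- t ^ 2)) 0 u).
  { apply RInt_ge_0; auto. intros; left; apply exp_pos. }
  assert (I1 : RInt (fun t => exp (- t ^ 2)) 0 u <= atan u).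
  { assert (Hd : is_RInt (fun t => / (1 + t ^ 2)) 0 u (minus (atan u) (atan 0))).
    { apply (is_RInt_derive (V:=R_CompleteNormedModule)).
      - intros x _. apply is_derive_Reals. apply derivable_pt_lim_atan.
      - intros x _. apply cont_inv. apply cont_plus. apply cont_const. apply cont_pow, cont_id.
        assert (0 <= x ^ 2) by apply pow2_ge_0. lra. }
    replace (atan u) with (RInt (fun t => / (1 + t ^ 2)) 0 u).
    2:{ apply (is_RInt_unique (V:=R_CompleteNormedModule)) in Hd. rewrite Hd. rewrite atan_0. unfold minus, plus, opp; simpl. ring. }
    apply RInt_le; auto. eexists; eauto.
    intros x _. cbv beta. assert (0 <= x ^ 2) by apply pow2_ge_0.
    rewrite exp_Ropp. apply Rinv_le_contravar. lra.
    destruct (Req_dec (x^2) 0) as [e|ne]. rewrite e, exp_0. lra.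
    left. apply exp_ineq1. auto. }
  assert (atan u < PI / 2) by apply atan_bound.
  unfold erf. split.
  - apply Rmult_le_pos; auto. apply Rmult_le_pos. lra. left; apply Rinv_0_lt_compat; auto.
  - assert (Hle : 2 / sqrt PI * RInt (fun t => exp (- t ^ 2)) 0 u <= 2 / sqrt PI * (PI / 2)).
    { apply Rmult_le_compat_l. apply Rmult_le_pos. lra. left; apply Rinv_0_lt_compat; auto. lra. }
    assert (E2 : 2 / sqrt PI * (PI / 2) = sqrt PI).
    { assert (sqrt PI * sqrt PI = PI) by (apply sqrt_sqrt; lra).
      set (s := sqrt PI) in *. rewrite <- H0. field. lra. }
    lra.
Qed.

Lemma Afun_cont Gam n x : continuous (Afun Gam n) x.
Proof.
  unfold Afun. apply cont_sum; intros k; apply cont_sum; intros j.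
  apply cont_mult; [apply cont_const|apply cont_pow, cont_id].
Qed.
Lemma Bfun_cont Gam n x : continuous (Bfun Gam n) x.
Proof.
  unfold Bfun. apply cont_sum; intros k; apply cont_sum; intros j.
  apply cont_mult; [apply cont_const|apply cont_pow, cont_id].
Qed.
Lemma Cfun_cont Gam n x : continuous (Cfun Gam n) x.
Proof.
  unfold Cfun. apply cont_sum; intros k; apply cont_sum; intros j.
  apply cont_mult; [apply cont_const|apply cont_pow, cont_id].
Qed.

Lemma F2_cont Gam n K :
  (forall x, 0 < Afun Gam n x /\ 0 < Afun Gam n x * Cfun Gam n x - Bfun Gam n x ^ 2) ->
  forall x, continuous (F2 Gam n K) x.
Proof.
  intros Hp x. destruct (Hp x) as [HA HD].
  assert (cA := Afun_cont Gam n x). assert (cB := Bfun_cont Gam n x).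
  assert (cC := Cfun_cont Gam n x).
  assert (cBK : continuous (fun y => Rabs (Bfun Gam n y * K)) x).
  { apply continuous_Rabs_comp, cont_mult; auto. apply cont_const. }
  unfold F2; cbv zeta.
  apply cont_mult; [apply cont_mult|].
  - apply cont_mult. apply cont_const.
    apply cont_div. apply cont_mult; auto. apply cont_const.
    unfold Rpower. apply continuous_exp_comp. apply cont_mult. apply cont_const.
    apply (continuous_comp (Afun Gam n) ln); auto. now apply continuous_ln.
    apply Rgt_not_eq, exp_pos.
  - apply continuous_exp_comp. apply cont_div. apply cont_const.
    apply cont_mult; auto; apply cont_const. lra.
  - apply (continuous_comp _ erf); [|apply erf_cont].
    apply cont_div; auto. apply continuous_sqrt_comp.
    apply cont_mult. apply cont_mult; auto. apply cont_const.
    apply cont_minus. apply cont_mult; auto. apply cont_pow; auto.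
    apply Rgt_not_eq, sqrt_lt_R0. nra.
Qed.

Definition c0 (m M : R) := (1 / PI) * sqrt 2 * sqrt PI * sqrt (2 * PI * M) / (2 * PI * m).

Lemma F2_bound (Gam : Z -> R) (g : R -> R) m M n q K x :
  (forall y, continuous g y) ->
  (forall z, Gam z = RInt (fun p => cos (IZR z * p) * g p) (-PI) PI) ->
  (forall p, -PI <= p <= PI -> m <= g p <= M) -> 0 < m -> (1 <= n)%nat ->
  (2 * q <= n)%nat -> 1 <= Rabs x ->
  0 <= F2 Gam n K x <= c0 m M * Rabs K * sqrt (INR n) / Rabs x ^ q.
Proof.
  intros Hg HG Hb Hm Hn Hq Hx.
  assert (HPI := PI_RGT_0).
  assert (HmM : m <= M) by (destruct (Hb 0); lra).
  destruct (key_ineqs Gam g m M n x Hg HG Hb Hm Hn) as [HA [HC [HC0 HBC]]].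
  assert (HV := vsq_le n x Hx). assert (HS1 := Ssq_ge1 n x). assert (HSa := Ssq_amgm n x).
  set (A := Afun Gam n x) in *. set (B := Bfun Gam n x) in *. set (C := Cfun Gam n x) in *.
  set (S := Ssq n x) in *. set (V := sum_f_R0 (fun k => vv x k ^ 2) n) in *.
  assert (Apos : 0 < A). { assert (0 < 2 * PI * m) by nra. nra. }
  set (a := sqrt A). assert (aa : a * a = A) by (apply sqrt_sqrt; lra).
  assert (ap : 0 < a) by (apply sqrt_lt_R0; lra).
  set (cc := sqrt C). assert (ccc : cc * cc = C) by (apply sqrt_sqrt; lra).
  assert (ccp : 0 <= cc) by apply sqrt_pos.
  set (sS := sqrt S). assert (sSS : sS * sS = S) by (apply sqrt_sqrt; lra).
  assert (sSp : 0 < sS) by (apply sqrt_lt_R0; lra).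
  set (r := sqrt (2 * PI * M)). assert (rr : r * r = 2 * PI * M) by (apply sqrt_sqrt; nra).
  assert (rp : 0 <= r) by apply sqrt_pos.
  set (nR := INR n). assert (nRp : 1 <= nR) by (unfold nR; apply (le_INR 1); lia).
  set (sn := sqrt nR). assert (snn : sn * sn = nR) by (apply sqrt_sqrt; lra).
  assert (snp : 0 < sn) by (apply sqrt_lt_R0; lra).
  set (sn1 := sqrt (nR + 1)). assert (sn1n : sn1 * sn1 = nR + 1) by (apply sqrt_sqrt; lra).
  assert (sn1p : 0 <= sn1) by apply sqrt_pos.
  set (X := Rabs x ^ q). assert (Xp : 1 <= X) by (unfold X; apply pow_R1_Rle; lra).
  assert (X2 : X * X <= Rabs x ^ n).
  { unfold X. rewrite <- pow_add. apply Rle_pow; lra || lia. }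
  assert (RP : Rpower A (3 / 2) = A * a).
  { replace (3 / 2) with (1 + / 2) by field. rewrite Rpower_plus, Rpower_1, Rpower_sqrt; auto. }
  set (D := sqrt (2 * A * (A * C - B ^ 2))).
  assert (Dp : 0 < D) by (apply sqrt_lt_R0; nra).
  set (u := Rabs (B * K) / D).
  assert (up : 0 <= u) by (unfold u; apply Rmult_le_pos; [apply Rabs_pos| left; apply Rinv_0_lt_compat; auto]).
  destruct (erf_bounds u up) as [E0 E1].
  set (e := exp (- K ^ 2 / (2 * A))).
  assert (e0 : 0 < e) by apply exp_pos.
  assert (e1 : e <= 1).
  { unfold e. rewrite <- exp_0.
    assert (0 <= K ^ 2) by apply pow2_ge_0. unfold Rdiv.
    assert (0 < / (2 * A)) by (apply Rinv_0_lt_compat; lra).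
    assert (- K ^ 2 * / (2 * A) <= 0) by nra.
    destruct (Req_dec (- K ^ 2 * / (2 * A)) 0) as [ez|nz]. rewrite ez; lra.
    left; apply exp_increasing; lra. }
  assert (F2e : F2 Gam n K x = (1 / PI) * (sqrt 2 * (Rabs B * Rabs K) / (A * a)) * e * erf u).
  { unfold F2; cbv zeta. fold A B C. rewrite RP. unfold e, u, D. rewrite !Rabs_mult. reflexivity. }
  rewrite F2e.
  assert (s2 : 0 < sqrt 2) by (apply sqrt_lt_R0; lra).
  assert (sPI : 0 < sqrt PI) by (apply sqrt_lt_R0; lra).
  assert (absB := Rabs_pos B). assert (absK := Rabs_pos K).
  assert (Fac : 0 <= (1 / PI) * (sqrt 2 * (Rabs B * Rabs K) / (A * a))).
  { apply Rmult_le_pos. left; unfold Rdiv; rewrite Rmult_1_l; apply Rinv_0_lt_compat; lra.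
    apply Rmult_le_pos. apply Rmult_le_pos; lra || nra. left; apply Rinv_0_lt_compat; nra. }
  split.
  { apply Rmult_le_pos; auto. apply Rmult_le_pos; lra. }
  assert (St1 : (1 / PI) * (sqrt 2 * (Rabs B * Rabs K) / (A * a)) * e * erf u <=
                (1 / PI) * (sqrt 2 * (Rabs B * Rabs K) / (A * a)) * sqrt PI).
  { rewrite Rmult_assoc. apply Rmult_le_compat_l; auto.
    assert (e * erf u <= 1 * sqrt PI) by (apply Rmult_le_compat; lra). lra. }
  assert (Bb : Rabs B <= a * cc).
  { assert (Rabs B * Rabs B <= (a * cc) * (a * cc)).
    { rewrite <- Rabs_mult. replace (Rabs (B * B)) with (B ^ 2) by (rewrite Rabs_pos_eq by nra; ring).
      replace (a * cc * (a * cc)) with (A * C) by (rewrite <- aa, <- ccc; ring). lra. }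
    assert (0 <= a * cc) by nra. nra. }
  assert (Cb : cc <= r * nR * sS).
  { assert (cc * cc <= (r * nR * sS) * (r * nR * sS)).
    { rewrite ccc. replace (r * nR * sS * (r * nR * sS)) with ((r * r) * (nR ^ 2) * (sS * sS)) by ring.
      rewrite rr, sSS. assert (0 <= 2 * PI * M) by nra. 
      apply Rle_trans with (2 * PI * M * V); auto. fold nR in HV.
      replace (2 * PI * M * nR ^ 2 * S) with (2 * PI * M * (nR ^ 2 * S)) by ring.
      apply Rmult_le_compat_l; auto. }
    assert (0 <= r * nR * sS) by (apply Rmult_le_pos; [apply Rmult_le_pos|]; lra).
    nra. }
  assert (St2 : Rabs B / (A * a) <= r / (2 * PI * m) * (nR / sS)).
  { apply Rle_trans with (cc / A).
    { unfold Rdiv. replace (cc * / A) with ((a * cc) * / (A * a)) by (field; lra).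
      apply Rmult_le_compat_r; auto. left; apply Rinv_0_lt_compat; nra. }
    apply Rle_trans with (r * nR * sS / (2 * PI * m * S)).
    { unfold Rdiv. apply Rmult_le_compat; auto. left; apply Rinv_0_lt_compat; lra.
      apply Rinv_le_contravar; auto. assert (0 < 2 * PI * m) by nra. nra. }
    right. rewrite <- sSS. field. repeat split; lra. }
  assert (St3 : nR / sS <= sn / X).
  { assert (sSb : sn1 * X <= sS).
    { unfold sS. replace (sn1 * X) with (sqrt ((nR + 1) * (X * X))).
      2:{ rewrite sqrt_mult by (lra || nra). unfold sn1. f_equal. apply sqrt_square. lra. }
      apply sqrt_le_1_alt. unfold nR; rewrite <- S_INR.
      apply Rle_trans with (INR (Datatypes.S n) * Rabs x ^ n); auto.
      apply Rmult_le_compat_l. apply pos_INR. auto. }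
    assert (nb : nR <= sn * sn1).
    { assert (nR * nR <= (sn * sn1) * (sn * sn1)).
      { replace ((sn * sn1) * (sn * sn1)) with ((sn * sn) * (sn1 * sn1)) by ring.
        rewrite snn, sn1n. nra. }
      assert (0 <= sn * sn1) by nra. nra. }
    unfold Rdiv. apply (Rmult_le_reg_r (sS * X)). nra.
    replace (nR * / sS * (sS * X)) with (nR * X) by (field; lra).
    replace (sn * / X * (sS * X)) with (sn * sS) by (field; lra).
    apply Rle_trans with (sn * sn1 * X). apply Rmult_le_compat_r; lra.
    rewrite Rmult_assoc. apply Rmult_le_compat_l; lra. }
  eapply Rle_trans; [exact St1|].
  unfold c0. fold r.
  replace ((1 / PI) * (sqrt 2 * (Rabs B * Rabs K) / (A * a)) * sqrt PI)
     with ((1 / PI) * sqrt 2 * sqrt PI * Rabs K * (Rabs B / (A * a))) by (field; nra).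
  replace (1 / PI * sqrt 2 * sqrt PI * r / (2 * PI * m) * Rabs K * sn / X)
     with ((1 / PI) * sqrt 2 * sqrt PI * Rabs K * (r / (2 * PI * m) * (sn / X))) by (field; nra).
  apply Rmult_le_compat_l.
  { apply Rmult_le_pos; auto. apply Rmult_le_pos; [apply Rmult_le_pos|]; try lra.
    left; unfold Rdiv; rewrite Rmult_1_l; apply Rinv_0_lt_compat; lra. }
  eapply Rle_trans; [exact St2|].
  apply Rmult_le_compat_l; auto.
  unfold Rdiv; apply Rmult_le_pos; auto. left; apply Rinv_0_lt_compat; nra.
Qed.

Lemma int_power D p b : 1 <= b ->
  is_RInt (fun x => D / x ^ (p + 2)) 1 b
    (D / INR (p + 1) * (1 - / b ^ (p + 1))).
Proof.
  intros Hb.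
  assert (Hp0 : INR (p + 1) <> 0) by (apply not_0_INR; lia).
  assert (H := is_RInt_derive (V:=R_CompleteNormedModule)
    (fun x => - D / (INR (p + 1) * x ^ (p + 1))) (fun x => D / x ^ (p + 2)) 1 b).
  replace (D / INR (p + 1) * (1 - / b ^ (p + 1))) with
    (minus (- D / (INR (p + 1) * b ^ (p + 1))) (- D / (INR (p + 1) * 1 ^ (p + 1)))).
  apply H.
  - intros x Hx. rewrite Rmin_left, Rmax_right in Hx by lra.
    assert (0 < x ^ p) by (apply pow_lt; lra).
    auto_derive.
    + apply Rmult_integral_contrapositive; split; auto. apply pow_nonzero; lra.
    + replace (p + 1)%nat with (S p) by lia. replace (p + 2)%nat with (S (S p)) by lia.
      simpl pred. simpl pow. field. replace (S p) with (p+1)%nat by lia. repeat split; auto; lra.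
  - intros x Hx. rewrite Rmin_left, Rmax_right in Hx by lra.
    apply cont_div. apply cont_const. apply cont_pow, cont_id. apply pow_nonzero; lra.
  - rewrite pow1. unfold minus, plus, opp; simpl. field.
    split; auto. apply pow_nonzero; lra.
Qed.

Lemma improper (G : R -> R) (D : R) (p : nat) :
  (forall x, continuous G x) ->
  (forall x, 1 <= x -> 0 <= G x <= D / x ^ (p + 2)) ->
  exists I, 0 <= I <= D / INR (p + 1) /\
    forall eps, 0 < eps -> exists b0, 1 <= b0 /\
      forall b, b0 <= b -> Rabs (RInt G 1 b - I) < eps.
Proof.
  intros Hc Hb.
  assert (exG : forall a b, ex_RInt G a b).
  { intros; apply (ex_RInt_continuous (V:=R_CompleteNormedModule)); auto. }
  assert (Dp : 0 <= D). { destruct (Hb 1) as [h1 h2]; [lra|]. rewrite pow1 in h2. lra. }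
  assert (ip : 0 < INR (p + 1)) by (apply lt_0_INR; lia).
  set (Phi := fun b => RInt G 1 b).
  assert (mono : forall b b', 1 <= b <= b' -> Phi b <= Phi b').
  { intros b b' Hbb. unfold Phi. rewrite <- (RInt_Chasles (V:=R_CompleteNormedModule) G 1 b b'); auto.
    assert (0 <= RInt G b b').
    { apply RInt_ge_0; try lra; auto. intros x Hx; apply Hb; lra. }
    simpl. unfold plus; simpl. lra. }
  assert (bnd : forall b, 1 <= b -> Phi b <= D / INR (p + 1)).
  { intros b Hb1. unfold Phi.
    assert (Hi := int_power D p b Hb1).
    apply Rle_trans with (RInt (fun x => D / x ^ (p + 2)) 1 b).
    - apply RInt_le; auto. eexists; eauto. intros x Hx; apply Hb; lra.
    - rewrite (is_RInt_unique _ _ _ _ Hi).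
      assert (0 < / b ^ (p + 1)) by (apply Rinv_0_lt_compat, pow_lt; lra).
      assert (0 <= D / INR (p + 1)) by (unfold Rdiv; apply Rmult_le_pos; [lra| left; apply Rinv_0_lt_compat; lra]).
      nra. }
  set (E := fun y => exists b, 1 <= b /\ y = Phi b).
  destruct (completeness E) as [I [Iub Ilub]].
  { exists (D / INR (p + 1)). intros y [b [hb ->]]. now apply bnd. }
  { exists (Phi 1). exists 1. split; lra. }
  exists I. split.
  - split.
    + apply Rle_trans with (Phi 1). unfold Phi. rewrite RInt_point. right; reflexivity.
      apply Iub. exists 1; split; lra.
    + apply Ilub. intros y [b [hb ->]]. now apply bnd.
  - intros eps He.
    destruct (classic (exists b0, 1 <= b0 /\ I - eps < Phi b0)) as [[b0 [h0 h1]]|nE].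
    + exists b0. split; auto. intros b hb.
      assert (Phi b0 <= Phi b) by (apply mono; lra).
      assert (Phi b <= I) by (apply Iub; exists b; split; [lra|auto]).
      fold (Phi b). rewrite Rabs_left1; lra.
    + exfalso. assert (I <= I - eps); [|lra].
      apply Ilub. intros y [b [hb ->]].
      apply Rnot_lt_le. intro hl. apply nE. exists b; split; auto.
Qed.

Lemma to_gen_pos (G : R -> R) I :
  (forall x, continuous G x) ->
  (forall eps, 0 < eps -> exists b0, 1 <= b0 /\ forall b, b0 <= b -> Rabs (RInt G 1 b - I) < eps) ->
  is_RInt_gen G (at_point 1) (Rbar_locally p_infty) I.
Proof.
  intros Hc Hconv P [eps HP].
  destruct (Hconv eps (cond_pos eps)) as [b0 [h0 h1]].
  apply (Filter_prod _ _ _ (fun a => a = 1) (fun b => b0 < b)).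
  - reflexivity.
  - exists b0. auto.
  - intros x y -> hy. exists (RInt G 1 y). split.
    + apply (RInt_correct (V:=R_CompleteNormedModule)).
      apply (ex_RInt_continuous (V:=R_CompleteNormedModule)); auto.
    + apply HP. apply h1. lra.
Qed.

Lemma to_gen_neg (G : R -> R) I :
  (forall x, continuous G x) ->
  (forall eps, 0 < eps -> exists b0, 1 <= b0 /\
     forall b, b0 <= b -> Rabs (RInt (fun y => G (- y)) 1 b - I) < eps) ->
  is_RInt_gen G (Rbar_locally m_infty) (at_point (-1)) I.
Proof.
  intros Hc Hconv P [eps HP].
  destruct (Hconv eps (cond_pos eps)) as [b0 [h0 h1]].
  apply (Filter_prod _ _ _ (fun a => a < - b0) (fun b => b = -1)).
  - exists (- b0). auto.
  - reflexivity.
  - intros x y hx ->. exists (RInt (fun y => G (- y)) 1 (- x)). split.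
    + set (H := fun y => G (- y)).
      assert (iH : is_RInt H (- (-1)) (- x) (RInt H 1 (- x))).
      { replace (- (-1)) with 1 by ring.
        apply (RInt_correct (V:=R_CompleteNormedModule)).
        apply (ex_RInt_continuous (V:=R_CompleteNormedModule)). intros z _.
        unfold H. apply (continuous_comp (fun y => - y) G); auto. apply cont_opp, cont_id. }
      apply is_RInt_comp_opp in iH. apply is_RInt_swap in iH.
      apply is_RInt_opp in iH.
      rewrite opp_opp in iH. simpl. eapply is_RInt_ext; [|exact iH].
      intros z _. unfold H. unfold opp; simpl. rewrite !Ropp_involutive. reflexivity.
    + apply HP. apply h1. lra.
Qed.

Lemma c0_pos m M : 0 < m -> m <= M -> 0 < c0 m M.
Proof.
  intros Hm HM. assert (HPI := PI_RGT_0). unfold c0.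
  assert (0 < sqrt 2) by (apply sqrt_lt_R0; lra).
  assert (0 < sqrt PI) by (apply sqrt_lt_R0; lra).
  assert (0 < sqrt (2 * PI * M)) by (apply sqrt_lt_R0; nra).
  assert (0 < 1 / PI) by (unfold Rdiv; rewrite Rmult_1_l; apply Rinv_0_lt_compat; lra).
  assert (0 < / (2 * PI * m)) by (apply Rinv_0_lt_compat; nra).
  unfold Rdiv. rewrite Rmult_1_l. repeat apply Rmult_lt_0_compat; auto; apply Rinv_0_lt_compat; nra.
Qed.

Lemma final_bound c e (n q : nat) K0 :
  0 < c -> 0 <= e -> (6 <= n)%nat -> (2 * q <= n <= 2 * q + 1)%nat ->
  Rabs K0 <= e * sqrt (INR n) ->
  c * Rabs K0 * sqrt (INR n) / INR (q - 2 + 1) <= 4 * c * e.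
Proof.
  intros Hc He Hn Hq HK.
  assert (Hq1 : INR (q - 2 + 1) = INR q - 1) by (rewrite plus_INR, minus_INR by lia; simpl; ring).
  assert (HnR : 6 <= INR n) by (replace 6 with (INR 6) by (simpl; ring); apply le_INR; lia).
  assert (Hqn : 2 * INR q <= INR n <= 2 * INR q + 1).
  { split. replace 2 with (INR 2) by (simpl; ring). rewrite <- mult_INR. apply le_INR; lia.
    replace 2 with (INR 2) by (simpl; ring). rewrite <- mult_INR, <- S_INR. apply le_INR; lia. }
  rewrite Hq1.
  assert (sn : sqrt (INR n) * sqrt (INR n) = INR n) by (apply sqrt_sqrt; lra).
  assert (snp : 0 <= sqrt (INR n)) by apply sqrt_pos.
  assert (Hk2 : Rabs K0 * sqrt (INR n) <= e * INR n).
  { replace (e * INR n) with (e * sqrt (INR n) * sqrt (INR n)) by (rewrite Rmult_assoc, sn; ring). apply Rmult_le_compat_r; auto. }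
  assert (qp : INR n / 4 <= INR q - 1) by lra.
  apply Rle_trans with (c * (e * INR n) / (INR q - 1)).
  { unfold Rdiv. apply Rmult_le_compat_r. left; apply Rinv_0_lt_compat; lra.
    rewrite Rmult_assoc. apply Rmult_le_compat_l; lra. }
  apply (Rmult_le_reg_r (INR q - 1)). lra.
  unfold Rdiv. rewrite Rmult_assoc, Rinv_l, Rmult_1_r by lra.
  assert (0 <= c * e) by (apply Rmult_le_pos; lra).
  nra.
Qed.

Lemma core (Gam : Z -> R) (g : R -> R) m M K0 n e :
  (forall y, continuous g y) ->
  (forall z, Gam z = RInt (fun p => cos (IZR z * p) * g p) (-PI) PI) ->
  (forall p, -PI <= p <= PI -> m <= g p <= M) -> 0 < m -> (6 <= n)%nat -> 0 <= e ->
  Rabs K0 <= e * sqrt (INR n) ->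
  (exists I, is_RInt_gen (F2 Gam n K0) (at_point 1) (Rbar_locally p_infty) I
     /\ Rabs I <= 4 * c0 m M * e) /\
  (exists I, is_RInt_gen (F2 Gam n K0) (Rbar_locally m_infty) (at_point (-1)) I
     /\ Rabs I <= 4 * c0 m M * e).
Proof.
  intros Hg HG Hb Hm Hn He HK.
  assert (HmM : m <= M) by (destruct (Hb 0); [assert (H := PI_RGT_0); lra|lra]).
  assert (cp := c0_pos m M Hm HmM).
  assert (HPI := PI_RGT_0).
  set (q := (n / 2)%nat).
  assert (Hq : (2 * q <= n <= 2 * q + 1)%nat).
  { pose proof (Nat.div_mod n 2 ltac:(lia)). pose proof (Nat.mod_upper_bound n 2 ltac:(lia)).
    unfold q; split; lia. }
  set (p := (q - 2)%nat).
  assert (pq : (p + 2 = q)%nat) by (unfold p; lia).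
  assert (Hpos : forall x, 0 < Afun Gam n x /\ 0 < Afun Gam n x * Cfun Gam n x - Bfun Gam n x ^ 2).
  { intros x. destruct (key_ineqs Gam g m M n x Hg HG Hb Hm ltac:(lia)) as [h1 [_ [_ h4]]].
    assert (h := Ssq_ge1 n x). split; [|lra].
    assert (0 < 2 * PI * m) by nra. nra. }
  assert (Hc := F2_cont Gam n K0 Hpos).
  set (D := c0 m M * Rabs K0 * sqrt (INR n)).
  assert (FB := final_bound (c0 m M) e n q K0 cp He Hn Hq HK). fold D in FB. fold p in FB.
  split.
  - destruct (improper (F2 Gam n K0) D p Hc) as [I [[I0 I1] Hconv]].
    { intros x Hx. rewrite pq.
      assert (Hax : 1 <= Rabs x) by (rewrite Rabs_pos_eq; lra).
      destruct (F2_bound Gam g m M n q K0 x Hg HG Hb Hm ltac:(lia) ltac:(lia) Hax) as [b1 b2].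
      rewrite (Rabs_pos_eq x) in b2 by lra. split; auto. }
    exists I. split. apply to_gen_pos; auto.
    rewrite Rabs_pos_eq by lra. lra.
  - assert (Hc' : forall y, continuous (fun y => F2 Gam n K0 (- y)) y).
    { intros y. apply (continuous_comp (fun y => - y) (F2 Gam n K0)); auto.
      apply cont_opp, cont_id. }
    destruct (improper (fun y => F2 Gam n K0 (- y)) D p Hc') as [I [[I0 I1] Hconv]].
    { intros x Hx. rewrite pq.
      assert (Hax : 1 <= Rabs (- x)) by (rewrite Rabs_Ropp, Rabs_pos_eq; lra).
      destruct (F2_bound Gam g m M n q K0 (- x) Hg HG Hb Hm ltac:(lia) ltac:(lia) Hax) as [b1 b2].
      rewrite Rabs_Ropp, (Rabs_pos_eq x) in b2 by lra. split; auto. }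
    exists I. split. apply to_gen_neg; auto.
    rewrite Rabs_pos_eq by lra. lra.
Qed.

Lemma lnln_ge1 (n : nat) : (27 <= n)%nat -> 1 <= ln (ln (INR n)).
Proof.
  intros Hn.
  assert (H27 : 27 <= INR n) by (replace 27 with (INR 27) by (simpl; ring); apply le_INR; lia).
  assert (e1 := exp_le_3). assert (e0 : 0 < exp 1) by apply exp_pos.
  assert (ee : exp (exp 1) <= 27).
  { apply Rle_trans with (exp 3).
    - destruct (Req_dec (exp 1) 3) as [h|h]. rewrite h; lra.
      left; apply exp_increasing; lra.
    - replace 3 with (1 + 1 + 1) by ring. rewrite !exp_plus.
      assert (exp 1 * exp 1 <= 3 * 3) by nra. nra. }
  assert (l1 : exp 1 <= ln (INR n)).
  { rewrite <- (ln_exp (exp 1)). apply ln_le. apply exp_pos. lra. }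
  rewrite <- (ln_exp 1). apply ln_le. apply exp_pos. lra.
Qed.

Lemma sqrt_bound (n : nat) : (27 <= n)%nat ->
  sqrt (INR n / ln (ln (INR n))) <= sqrt (INR n).
Proof.
  intros Hn. apply sqrt_le_1_alt.
  assert (h := lnln_ge1 n Hn). assert (0 <= INR n) by apply pos_INR.
  unfold Rdiv. apply Rle_trans with (INR n * 1); [|lra].
  apply Rmult_le_compat_l; auto. rewrite <- Rinv_1. apply Rinv_le_contravar; lra.
Qed.

Theorem lemma3p1
  (f : R -> R) (Gam : Z -> R) (K : nat -> R)
  (hf_cont : forall phi, -PI <= phi <= PI ->
     filterlim f (within (fun y => -PI <= y <= PI) (locally phi)) (locally (f phi)))
  (hf_pos : forall phi, -PI <= phi <= PI -> 0 < f phi)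
  (hGam : forall k : Z,
     Gam k = RInt (fun phi => cos (IZR k * phi) * f phi) (- PI) PI)
  (hGam_real : forall k : Z,
     RInt (fun phi => sin (IZR k * phi) * f phi) (- PI) PI = 0)
  (hGam0 : Gam 0%Z = 1)
  (hK : forall eps : R, 0 < eps -> exists N : nat, forall n : nat, (N <= n)%nat ->
     Rabs (K n) <= eps * sqrt (INR n / ln (ln (INR n)))) :
  (forall eps : R, 0 < eps -> exists N : nat, forall n : nat, (N <= n)%nat ->
     exists I : R,
       is_RInt_gen (F2 Gam n (K n)) (at_point 1) (Rbar_locally p_infty) I
       /\ Rabs I <= eps)
  /\
  (forall eps : R, 0 < eps -> exists N : nat, forall n : nat, (N <= n)%nat ->
     exists I : R,
       is_RInt_gen (F2 Gam n (K n)) (Rbar_locally m_infty) (at_point (-1)) I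
       /\ Rabs I <= eps).
Proof.
  assert (HPI := PI_RGT_0).
  set (g := fun y => f (clamp y)).
  assert (Hg : forall y, continuous g y) by apply (g_cont f hf_cont).
  assert (HG : forall z, Gam z = RInt (fun p => cos (IZR z * p) * g p) (-PI) PI).
  { intros z. rewrite hGam. apply RInt_ext. intros x Hx.
    rewrite Rmin_left, Rmax_right in Hx by lra. unfold g. rewrite clamp_id; auto. lra. }
  assert (Hcp : forall c, -PI <= c <= PI -> continuity_pt g c).
  { intros c _. apply continuity_pt_filterlim. apply Hg. }
  destruct (continuity_ab_min g (-PI) PI ltac:(lra) Hcp) as [mx [Hmx _]].
  destruct (continuity_ab_maj g (-PI) PI ltac:(lra) Hcp) as [Mx [HMx _]].
  set (m := g mx). set (M := g Mx).
  assert (Hm : 0 < m) by (unfold m, g; apply hf_pos, clamp_bounds).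
  assert (Hb : forall p, -PI <= p <= PI -> m <= g p <= M) by (intros; split; auto).
  assert (HmM : m <= M) by (destruct (Hb 0); lra).
  assert (cp := c0_pos m M Hm HmM).
  assert (main : forall eps, 0 < eps -> exists N : nat, forall n : nat, (N <= n)%nat ->
    (exists I, is_RInt_gen (F2 Gam n (K n)) (at_point 1) (Rbar_locally p_infty) I
     /\ Rabs I <= eps) /\
    (exists I, is_RInt_gen (F2 Gam n (K n)) (Rbar_locally m_infty) (at_point (-1)) I
     /\ Rabs I <= eps)).
  { intros eps Heps.
    set (e := eps / (4 * c0 m M)).
    assert (ep : 0 < e) by (unfold e, Rdiv; apply Rmult_lt_0_compat; auto; apply Rinv_0_lt_compat; lra).
    assert (ee : 4 * c0 m M * e = eps) by (unfold e; field; lra).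
    destruct (hK e ep) as [N0 HN0].
    exists (Nat.max N0 27). intros n Hn.
    assert (HKn : Rabs (K n) <= e * sqrt (INR n)).
    { apply Rle_trans with (e * sqrt (INR n / ln (ln (INR n)))).
      apply HN0; lia. apply Rmult_le_compat_l; [lra|]. apply sqrt_bound; lia. }
    rewrite <- ee.
    apply (core Gam g m M (K n) n e Hg HG Hb Hm ltac:(lia) ltac:(lra) HKn). }
  split.
  - intros eps Heps. destruct (main eps Heps) as [N HN]. exists N. intros n Hn.
    apply (HN n Hn).
  - intros eps Heps. destruct (main eps Heps) as [N HN]. exists N. intros n Hn.
    apply (HN n Hn).
Qed.
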